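(* Let $x_0<x_1<\cdots<x_6$ be real numbers and write $d_{i,j}=x_j-x_i$ for $i<j$. Let $y_0,\ldots,y_6$ be real numbers such that, for some $\epsilon>0$, (1) $-d_{1,2}y_0+d_{0,2}y_1-d_{0,1}y_2\ge\epsilon$, (2) $d_{3,4}y_0-d_{0,4}y_3+d_{0,3}y_4\ge\epsilon$, (3) $-d_{3,5}y_1+d_{1,5}y_3-d_{1,3}y_5\ge\epsilon$, (4) $d_{3,6}y_2-d_{2,6}y_3+d_{2,3}y_6\ge\epsilon$, (5) $d_{5,6}y_3-d_{3,6}y_5+d_{3,5}y_6\ge\epsilon$, (6) $-d_{5,6}y_4+d_{4,6}y_5-d_{4,5}y_6\ge\epsilon$. (Equivalently, with $p_i=(x_i,y_i)$: $p_1$ is strictly above $\overline{p_0p_2}$, $p_3$ is strictly below $\overline{p_0p_4}$, $p_3$ is strictly above $\overline{p_1p_5}$, $p_3$ is strictly below $\overline{p_2p_6}$, $p_5$ is strictly below $\overline{p_3p_6}$, and $p_5$ is strictly above $\overline{p_4p_6}$.) Then the visibility graph of the terrain with points $p_i=(x_i,y_i)$, $i=0,\ldots,6$, is $G'$.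
   Context: A terrain is an $x$-monotone polygonal chain with points $p_0,\ldots,p_{n-1}$ listed left to right (strictly increasing $x$-coordinates), consecutive points joined by segments. Points $p_i,p_j$ ($i<j$) see each other iff the open segment $\overline{p_ip_j}$ lies strictly above the terrain, i.e. iff $j=i+1$ or every $p_k$ with $i<k<j$ lies strictly below $\overline{p_ip_j}$. The visibility graph has vertex $v_i$ for $p_i$ and edge $\{v_i,v_j\}$ iff $p_i,p_j$ see each other. $G'$ is the graph on $v_0,\ldots,v_6$ with edge set $\{v_0v_1,v_0v_3,v_0v_4,v_0v_5,v_0v_6,v_1v_2,v_1v_3,v_1v_6,v_2v_3,v_2v_6,v_3v_4,v_3v_5,v_3v_6,v_4v_5,v_5v_6\}$. *)

(* Defs.v *)
From mathcomp Require Import all_boot all_order all_algebra.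
Set Implicit Arguments. Unset Strict Implicit. Unset Printing Implicit Defensive.
Import Order.TTheory GRing.Theory Num.Theory.
Local Open Scope ring_scope.

(* Terrain with points p_k = (x k, y k), k = 0 .. n-1 (only indices < n matter). *)

Definition strictly_below (R : realFieldType) (x y : nat -> R) (i j k : nat) : Prop :=
  y k < y i + (x k - x i) / (x j - x i) * (y j - y i).

Definition sees (R : realFieldType) (x y : nat -> R) (i j : nat) : Prop :=
  j = i.+1 \/ (forall k : nat, (i < k)%N -> (k < j)%N -> strictly_below x y i j k).

Definition vis_edge (R : realFieldType) (n : nat) (x y : nat -> R) (i j : nat) : Prop :=
  [/\ (i < n)%N, (j < n)%N &
      (((i < j)%N /\ sees x y i j) \/ ((j < i)%N /\ sees x y j i))].

Definition Gprime_edges : seq (nat * nat) :=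
  [:: (0,1); (0,3); (0,4); (0,5); (0,6); (1,2); (1,3); (1,6); (2,3); (2,6);
      (3,4); (3,5); (3,6); (4,5); (5,6)]%N.

Definition Gprime_edge (i j : nat) : bool :=
  ((i, j) \in Gprime_edges) || ((j, i) \in Gprime_edges).

Definition dx (R : realFieldType) (x : nat -> R) (i j : nat) : R := x j - x i.
Arguments dx {R} x (i j)%_N.

(* Main.v *)
Require Import Defs.
From mathcomp Require Import all_boot all_order all_algebra.
From mathcomp Require Import zify ring lra.
Import Order.TTheory GRing.Theory Num.Theory.
Set Implicit Arguments. Unset Strict Implicit. Unset Printing Implicit Defensive.
Local Open Scope ring_scope.

Definition Bf (R : realFieldType) (x y : nat -> R) (a b c : nat) : R :=
  (x c - x b) * y a - (x c - x a) * y b + (x b - x a) * y c.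

Definition rel3 (R : realFieldType) (m l r : R) : Prop :=
  exists d e f : R, [/\ 0 < d, 0 < e, 0 < f & d * m = e * l + f * r].

Section S.
Variable R : realFieldType.
Implicit Types m l r : R.

Lemma r_pp m l r : rel3 m l r -> 0 < l -> 0 < r -> 0 < m.
Proof. case=> d [e [f [hd he hf E]]] hl hr; nra. Qed.
Lemma r_lp m l r : rel3 m l r -> 0 < m -> r < 0 -> 0 < l.
Proof. case=> d [e [f [hd he hf E]]] hl hr; nra. Qed.
Lemma r_ln m l r : rel3 m l r -> m < 0 -> 0 < r -> l < 0.
Proof. case=> d [e [f [hd he hf E]]] hl hr; nra. Qed.
Lemma r_rp m l r : rel3 m l r -> 0 < m -> l < 0 -> 0 < r.
Proof. case=> d [e [f [hd he hf E]]] hl hr; nra. Qed.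
Lemma r_rn m l r : rel3 m l r -> m < 0 -> 0 < l -> r < 0.
Proof. case=> d [e [f [hd he hf E]]] hl hr; nra. Qed.

Variables (x y : nat -> R).
Hypothesis Hx : forall i j : nat, (i < j)%N -> (j < 7)%N -> x i < x j.

Section Q.
Variables (a b c d : nat).
Hypotheses (hab : (a < b)%N) (hbc : (b < c)%N) (hcd : (c < d)%N) (hd : (d < 7)%N).
Let hb : (b < 7)%N. Proof. lia. Qed.
Let hc : (c < 7)%N. Proof. lia. Qed.
Let hac : (a < c)%N. Proof. lia. Qed.
Let had : (a < d)%N. Proof. lia. Qed.
Let hbd : (b < d)%N. Proof. lia. Qed.
Let xab : 0 < x b - x a. Proof. by rewrite subr_gt0; apply: Hx. Qed.
Let xac : 0 < x c - x a. Proof. by rewrite subr_gt0; apply: Hx. Qed.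
Let xad : 0 < x d - x a. Proof. by rewrite subr_gt0; apply: Hx. Qed.
Let xbc : 0 < x c - x b. Proof. by rewrite subr_gt0; apply: Hx. Qed.
Let xbd : 0 < x d - x b. Proof. by rewrite subr_gt0; apply: Hx. Qed.
Let xcd : 0 < x d - x c. Proof. by rewrite subr_gt0; apply: Hx. Qed.

(* p1 = abc, p2 = abd, p3 = acd, p4 = bcd *)
Lemma Q123 : rel3 (Bf x y a b d) (Bf x y a b c) (Bf x y a c d).
Proof. exists (x c - x a), (x d - x a), (x b - x a); split => //; rewrite /Bf; ring. Qed.
Lemma Q124 : rel3 (Bf x y a b d) (Bf x y a b c) (Bf x y b c d).
Proof. exists (x c - x b), (x d - x b), (x b - x a); split => //; rewrite /Bf; ring. Qed.
Lemma Q134 : rel3 (Bf x y a c d) (Bf x y a b c) (Bf x y b c d).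
Proof. exists (x c - x b), (x d - x c), (x c - x a); split => //; rewrite /Bf; ring. Qed.
Lemma Q234 : rel3 (Bf x y a c d) (Bf x y a b d) (Bf x y b c d).
Proof. exists (x d - x b), (x d - x c), (x d - x a); split => //; rewrite /Bf; ring. Qed.
End Q.

Lemma SB i k j : (i < k)%N -> (k < j)%N -> (j < 7)%N ->
  (strictly_below x y i j k <-> 0 < Bf x y i k j).
Proof.
move=> h1 h2 h3.
have D : 0 < x j - x i by rewrite subr_gt0; apply: Hx => //; lia.
rewrite /strictly_below -subr_gt0.
have -> : y i + (x k - x i) / (x j - x i) * (y j - y i) - y k
   = Bf x y i k j / (x j - x i).
  rewrite /Bf; field; by rewrite gt_eqF.
by rewrite pmulr_lgt0 ?invr_gt0.
Qed.

End S.

Theorem lemma1 (R : realFieldType) (x y : nat -> R) :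
  (forall i j : nat, (i < j)%N -> (j < 7)%N -> x i < x j) ->
  (exists eps : R, 0 < eps /\
     (eps <= - dx x 1 2 * y 0%N + dx x 0 2 * y 1%N - dx x 0 1 * y 2%N) /\
     (eps <= dx x 3 4 * y 0%N - dx x 0 4 * y 3%N + dx x 0 3 * y 4%N) /\
     (eps <= - dx x 3 5 * y 1%N + dx x 1 5 * y 3%N - dx x 1 3 * y 5%N) /\
     (eps <= dx x 3 6 * y 2%N - dx x 2 6 * y 3%N + dx x 2 3 * y 6%N) /\
     (eps <= dx x 5 6 * y 3%N - dx x 3 6 * y 5%N + dx x 3 5 * y 6%N) /\
     (eps <= - dx x 5 6 * y 4%N + dx x 4 6 * y 5%N - dx x 4 5 * y 6%N)) ->
  forall i j : nat, (i < 7)%N -> (j < 7)%N ->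
    (vis_edge 7 x y i j <-> Gprime_edge i j).
Proof.
move=> Hx [eps [he [e1 [e2 [e3 [e4 [e5 e6]]]]]]].
have n012 : Bf x y 0 1 2 < 0 by move: e1; rewrite /Bf /dx; lra.
have p034 : 0 < Bf x y 0 3 4 by move: e2; rewrite /Bf /dx; lra.
have n135 : Bf x y 1 3 5 < 0 by move: e3; rewrite /Bf /dx; lra.
have p236 : 0 < Bf x y 2 3 6 by move: e4; rewrite /Bf /dx; lra.
have p356 : 0 < Bf x y 3 5 6 by move: e5; rewrite /Bf /dx; lra.
have n456 : Bf x y 4 5 6 < 0 by move: e6; rewrite /Bf /dx; lra.
have Q1 := @Q123 R x y Hx; have Q2 := @Q124 R x y Hx;
have Q3 := @Q134 R x y Hx; have Q4 := @Q234 R x y Hx.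
have p346 := r_lp (Q4 3 4 5 6 isT isT isT isT) p356 n456.
have p345 := r_lp (Q3 3 4 5 6 isT isT isT isT) p356 n456.
have p256 := r_pp (Q4 2 3 5 6 isT isT isT isT) p236 p356.
have p246 := r_pp (Q4 2 3 4 6 isT isT isT isT) p236 p346.
have n134 := r_ln (Q2 1 3 4 5 isT isT isT isT) n135 p345.
have p013 := r_lp (Q3 0 1 3 4 isT isT isT isT) p034 n134.
have p014 := r_lp (Q4 0 1 3 4 isT isT isT isT) p034 n134.
have p023 := r_rp (Q1 0 1 2 3 isT isT isT isT) p013 n012.
have p123 := r_rp (Q2 0 1 2 3 isT isT isT isT) p013 n012.
have n234 := r_rn (Q3 1 2 3 4 isT isT isT isT) n134 p123.
have p024 := r_pp (Q1 0 2 3 4 isT isT isT isT) p023 p034.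
have n235 := r_rn (Q3 1 2 3 5 isT isT isT isT) n135 p123.
have p045 := r_pp (Q3 0 3 4 5 isT isT isT isT) p034 p345.
have p035 := r_pp (Q2 0 3 4 5 isT isT isT isT) p034 p345.
have p015 := r_pp (Q1 0 1 3 5 isT isT isT isT) p013 p035.
have p025 := r_pp (Q1 0 2 3 5 isT isT isT isT) p023 p035.
have p056 := r_pp (Q3 0 3 5 6 isT isT isT isT) p035 p356.
have p036 := r_pp (Q2 0 3 5 6 isT isT isT isT) p035 p356.
have p046 := r_pp (Q3 0 3 4 6 isT isT isT isT) p034 p346.
have p016 := r_pp (Q1 0 1 3 6 isT isT isT isT) p013 p036.
have p026 := r_pp (Q1 0 2 3 6 isT isT isT isT) p023 p036.
have p126 := r_pp (Q2 1 2 3 6 isT isT isT isT) p123 p236.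
have p136 := r_pp (Q3 1 2 3 6 isT isT isT isT) p123 p236.
have p146 := r_pp (Q4 1 3 4 6 isT isT isT isT) p136 p346.
have p156 := r_pp (Q4 1 3 5 6 isT isT isT isT) p136 p356.
have SB' := @SB R x y Hx.
move=> i j Hi Hj; split.
- case=> _ _ [[Hij Hs]|[Hij Hs]].
  + case: i Hi Hij Hs => [|[|[|[|[|[|[|i]]]]]]] //= Hi;
    case: j Hj => [|[|[|[|[|[|[|j]]]]]]] //= Hj Hij;
    case => [//|H];
    first [ move: (H 1%N isT isT) | move: (H 3%N isT isT) | move: (H 5%N isT isT) ];
    rewrite SB' //; lra.
  + case: j Hj Hij Hs => [|[|[|[|[|[|[|j]]]]]]] //= Hj;
    case: i Hi => [|[|[|[|[|[|[|i]]]]]]] //= Hi Hij;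
    case => [//|H];
    first [ move: (H 1%N isT isT) | move: (H 3%N isT isT) | move: (H 5%N isT isT) ];
    rewrite SB' //; lra.
- move=> HG; split => //.
  case: i Hi HG => [|[|[|[|[|[|[|i]]]]]]] //= Hi;
  case: j Hj => [|[|[|[|[|[|[|j]]]]]]] //= Hj HG;
  first [ left; split; [done|] | right; split; [done|] ];
  first [ left; done | right; move=> k;
    case: k => [|[|[|[|[|[|[|k]]]]]]] //= Hk1 Hk2; rewrite SB' // ].
Qed.
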